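(* Let $(A,B,s,t,\Delta)$ be a left multiplier bialgebroid whose canonical maps $T_\lambda$ and $T_\rho$ are bijective and such that $s(I^t)A=A=t(I^s)A$. Then it has a unique left counit.
   Context: All algebras are associative complex algebras, not necessarily unital. For an algebra $A$ with $A_A$ non-degenerate, $L(A)$ denotes right $A$-module endomorphisms of $A$ (containing $A$ via left multiplication) and $M(A)=\{T\in L(A):aT\in A\ \forall a\}$. A left multiplier bialgebroid is a tuple $(A,B,s,t,\Delta)$: (i) $A,B$ algebras, $A_A$ non-degenerate and idempotent; (ii) $s\colon B\to M(A)$ homomorphism, $t\colon B\to M(A)$ anti-homomorphism with commuting images, $s,t$ injective, $s(B)A=A=t(B)A$; ${}_BA\otimes A^B$, the quotient of $A\otimes A$ by the span of $s(x)a\otimes b-a\otimes t(x)b$, is non-degenerate as a right module over $A\otimes1$ and $1\otimes A$; (iii) $\Delta$ is an algebra homomorphism into the algebra of endomorphisms $T$ of ${}_BA\otimes A^B$ for which $T(a\otimes1),T(1\otimes b)\in{}_BA\otimes A^B$ exist with $T(a\otimes b)=T(a\otimes1)(1\otimes b)=T(1\otimes b)(a\otimes1)$; (iv) $\Delta(s(x)t(y)as(x')t(y'))=(t(y)\otimes s(x))\Delta(a)(t(y')\otimes s(x'))$; (v) if $\Delta(b)(1\otimes c)=\sum p_i\otimes q_i$ and $\Delta(b)(a\otimes1)=\sum u_j\otimes v_j$ then $\sum\Delta(p_i)(a\otimes1)\otimes q_i=\sum u_j\otimes\Delta(v_j)(1\otimes c)$ in $A^{\otimes3}$ modulo the span of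 $s(x)a\otimes b\otimes c-a\otimes t(x)b\otimes c$ and $a\otimes s(x)b\otimes c-a\otimes b\otimes t(x)c$. Canonical maps: $T_\lambda$ from the quotient of $A\otimes A$ by the span of $t(x)a\otimes b-a\otimes bt(x)$ to ${}_BA\otimes A^B$, $a\otimes b\mapsto\Delta(b)(a\otimes1)$; $T_\rho$ from the quotient of $A\otimes A$ by the span of $as(x)\otimes b-a\otimes s(x)b$ to ${}_BA\otimes A^B$, $a\otimes b\mapsto\Delta(a)(1\otimes b)$. $I^s\subseteq B$ is the span of $\phi(a)$ over $a\in A$ and linear $\phi\colon A\to B$ with $\phi(s(x)a)=x\phi(a)$; $I^t\subseteq B$ is the span of $\psi(a)$ over linear $\psi\colon A\to B$ with $\psi(t(x)a)=\psi(a)x$. A left counit is a linear $\varepsilon\colon A\to B$ with $\varepsilon(s(x)a)=x\varepsilon(a)$, $\varepsilon(t(y)a)=\varepsilon(a)y$, $\sum t(\varepsilon(c_i))d_i=ab$ whenever $T_\rho(a\otimes b)=\sum c_i\otimes d_i$, and $\sum s(\varepsilon(d_i))c_i=ba$ whenever $T_\lambda(a\otimes b)=\sum c_i\otimes d_i$. *)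

(* Defs.v *)
From mathcomp Require Import all_boot all_algebra.
From mathcomp Require Import complex Rstruct.
Import GRing.Theory.

Set Implicit Arguments.
Unset Strict Implicit.
Unset Printing Implicit Defensive.

Local Open Scope ring_scope.

Definition CC : fieldType := (Rdefinitions.R)[i].

Definition is_algebra (V : lmodType CC) (m : V -> V -> V) : Prop :=
  [/\ (forall (k : CC) a a' b, m (k *: a + a') b = k *: m a b + m a' b),
      (forall (k : CC) a b b', m a (k *: b + b') = k *: m a b + m a b') &
      (forall a b c, m a (m b c) = m (m a b) c)].

Definition is_linear_map (V W : lmodType CC) (f : V -> W) : Prop :=
  forall (k : CC) a a', f (k *: a + a') = k *: f a + f a'.

(* An element  sum_i a_i (x) b_i  of A (x) A  is represented by the
   formal sum (list of pairs) [:: (a_1,b_1); ...].  A quotient of A (x) A by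
   the span of a family of relations is described by the class [bal] of
   bilinear forms vanishing on that family: two formal sums are equal in the
   quotient iff every such form takes the same value on them (the algebraic
   dual of a vector space separates its points).  Likewise for A (x) A (x) A. *)
Section Tensors.
Variable A : lmodType CC.

Definition ftensor := seq (A * A).
Definition ftensor3 := seq (A * A * A).

Definition bilinear_form (phi : A -> A -> CC) : Prop :=
  (forall (k : CC) a a' b, phi (k *: a + a') b = k * phi a b + phi a' b) /\
  (forall (k : CC) a b b', phi a (k *: b + b') = k * phi a b + phi a b').

Definition trilinear_form (psi : A -> A -> A -> CC) : Prop :=
  [/\ (forall (k : CC) a a' b c,
          psi (k *: a + a') b c = k * psi a b c + psi a' b c),
      (forall (k : CC) a b b' c,
          psi a (k *: b + b') c = k * psi a b c + psi a b' c) &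
      (forall (k : CC) a b c c',
          psi a b (k *: c + c') = k * psi a b c + psi a b c')].

Definition eval2 (phi : A -> A -> CC) (u : ftensor) : CC :=
  \sum_(p <- u) phi p.1 p.2.

Definition eval3 (psi : A -> A -> A -> CC) (u : ftensor3) : CC :=
  \sum_(p <- u) psi p.1.1 p.1.2 p.2.

Definition qeq2 (bal : (A -> A -> CC) -> Prop) (u v : ftensor) : Prop :=
  forall phi, bilinear_form phi -> bal phi -> eval2 phi u = eval2 phi v.

Definition qeq3 (bal : (A -> A -> A -> CC) -> Prop) (u v : ftensor3) : Prop :=
  forall psi, trilinear_form psi -> bal psi -> eval3 psi u = eval3 psi v.

Definition tscale (k : CC) (u : ftensor) : ftensor :=
  [seq (k *: p.1, p.2) | p <- u].

(* right multiplication by a (x) 1 and by 1 (x) b *)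
Definition rmul1 (m : A -> A -> A) (u : ftensor) (a : A) : ftensor :=
  [seq (m p.1 a, p.2) | p <- u].
Definition rmul2 (m : A -> A -> A) (u : ftensor) (b : A) : ftensor :=
  [seq (p.1, m p.2 b) | p <- u].

Definition lmulT (L1 L2 : A -> A) (u : ftensor) : ftensor :=
  [seq (L1 p.1, L2 p.2) | p <- u].

Definition qbijective (eqX eqY : ftensor -> ftensor -> Prop)
    (f : ftensor -> ftensor) : Prop :=
  [/\ (forall u v, eqX u v -> eqY (f u) (f v)),
      (forall u v, eqY (f u) (f v) -> eqX u v) &
      (forall w, exists u, eqY (f u) w)].

End Tensors.

Section Bialgebroid.
Variables (A B : lmodType CC) (mA : A -> A -> A) (mB : B -> B -> B).
(* s(x) in M(A) is given by its left action  a |-> s(x)a  (sL x)  and its right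
   action  a |-> a s(x)  (sR x); likewise for t. *)
Variables (sL sR tL tR : B -> A -> A).
(* Delta: D1 c a = Delta(c)(a (x) 1),  D2 c b = Delta(c)(1 (x) b). *)
Variables (D1 D2 : A -> A -> ftensor A).

(* ( L, R ) is an element of M(A): L in L(A) (right A-module endomorphism of
   A), and for every a, a L  is again in A, namely  R a. *)
Definition in_MA (L R : A -> A) : Prop :=
  [/\ is_linear_map L,
      (forall a b, L (mA a b) = mA (L a) b) &
      (forall a b, mA (R a) b = mA a (L b))].

Definition right_nondegenerate : Prop :=
  forall a, (forall b, mA a b = 0) -> a = 0.
Definition idempotent_alg : Prop :=
  forall a, exists n (b c : 'I_n -> A), a = \sum_(i < n) mA (b i) (c i).

Definition balQ (phi : A -> A -> CC) : Prop :=        (* _B A (x) A^B *)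
  forall x a b, phi (sL x a) b = phi a (tL x b).
Definition bal_lambda (phi : A -> A -> CC) : Prop :=  (* domain of T_lambda *)
  forall x a b, phi (tL x a) b = phi a (tR x b).
Definition bal_rho (phi : A -> A -> CC) : Prop :=     (* domain of T_rho *)
  forall x a b, phi (sR x a) b = phi a (sL x b).
Definition bal3 (psi : A -> A -> A -> CC) : Prop :=
  (forall x a b c, psi (sL x a) b c = psi a (tL x b) c) /\
  (forall x a b c, psi a (sL x b) c = psi a b (tL x c)).

Definition eqQ := qeq2 balQ.
Definition eq_lambda := qeq2 bal_lambda.
Definition eq_rho := qeq2 bal_rho.
Definition eq3 := qeq3 bal3.

(* the endomorphism Delta(c) of _B A (x) A^B, on representatives:
   Delta(c)(sum a_i (x) b_i) = sum Delta(c)(a_i (x) 1)(1 (x) b_i) *)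
Definition Dact (c : A) (u : ftensor A) : ftensor A :=
  flatten [seq rmul2 mA (D1 c p.1) p.2 | p <- u].

Definition T_lambda (u : ftensor A) : ftensor A :=
  flatten [seq D1 p.2 p.1 | p <- u].
Definition T_rho (u : ftensor A) : ftensor A :=
  flatten [seq D2 p.1 p.2 | p <- u].

Record left_multiplier_bialgebroid : Prop := {
  lmb_algA : is_algebra mA;
  lmb_algB : is_algebra mB;
  lmb_nondegA : right_nondegenerate;
  lmb_idemA : idempotent_alg;
  lmb_sM : forall x, in_MA (sL x) (sR x);
  lmb_tM : forall x, in_MA (tL x) (tR x);
  lmb_s_lin : forall (k : CC) x y a, sL (k *: x + y) a = k *: sL x a + sL y a;
  lmb_t_lin : forall (k : CC) x y a, tL (k *: x + y) a = k *: tL x a + tL y a;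
  lmb_s_mul : forall x y a, sL (mB x y) a = sL x (sL y a);
  lmb_t_antimul : forall x y a, tL (mB x y) a = tL y (tL x a);
  lmb_st_comm : forall x y a, sL x (tL y a) = tL y (sL x a);
  lmb_s_inj : forall x y, (forall a, sL x a = sL y a) -> x = y;
  lmb_t_inj : forall x y, (forall a, tL x a = tL y a) -> x = y;
  lmb_sBA : forall a, exists n (x : 'I_n -> B) (b : 'I_n -> A),
              a = \sum_(i < n) sL (x i) (b i);
  lmb_tBA : forall a, exists n (x : 'I_n -> B) (b : 'I_n -> A),
              a = \sum_(i < n) tL (x i) (b i);
  lmb_Q_nondeg1 : forall w, (forall a, eqQ (rmul1 mA w a) [::]) -> eqQ w [::];
  lmb_Q_nondeg2 : forall w, (forall b, eqQ (rmul2 mA w b) [::]) -> eqQ w [::];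
  lmb_D_compat : forall c a b, eqQ (rmul2 mA (D1 c a) b) (rmul1 mA (D2 c b) a);
  lmb_D_welldef : forall c u v, eqQ u v -> eqQ (Dact c u) (Dact c v);
  lmb_D_homog : forall c (k : CC) u, eqQ (Dact c (tscale k u)) (tscale k (Dact c u));
  lmb_D_lin : forall (k : CC) c c' u,
      eqQ (Dact (k *: c + c') u) (tscale k (Dact c u) ++ Dact c' u);
  lmb_D_mul : forall c c' u, eqQ (Dact (mA c c') u) (Dact c (Dact c' u));
  lmb_D_bimod : forall x y x' y' a u,
      eqQ (Dact (sL x (tL y (tR y' (sR x' a)))) u)
          (lmulT (tL y) (sL x) (Dact a (lmulT (tL y') (sL x') u)));
  lmb_coassoc : forall a b c (P U : ftensor A),
      eqQ P (D2 b c) -> eqQ U (D1 b a) ->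
      eq3 (flatten [seq [seq (r.1, r.2, q.2) | r <- D1 q.1 a] | q <- P])
          (flatten [seq [seq (u.1, r.1, r.2) | r <- D2 u.2 c] | u <- U])
}.

Definition in_Is (y : B) : Prop :=
  exists n (phi : 'I_n -> A -> B) (a : 'I_n -> A),
    (forall i, is_linear_map (phi i)) /\
    (forall i x b, phi i (sL x b) = mB x (phi i b)) /\
    y = \sum_(i < n) phi i (a i).
Definition in_It (y : B) : Prop :=
  exists n (psi : 'I_n -> A -> B) (a : 'I_n -> A),
    (forall i, is_linear_map (psi i)) /\
    (forall i x b, psi i (tL x b) = mB (psi i b) x) /\
    y = \sum_(i < n) psi i (a i).

Definition sItA_eq_A : Prop :=
  forall a, exists n (y : 'I_n -> B) (b : 'I_n -> A),
    (forall i, in_It (y i)) /\ a = \sum_(i < n) sL (y i) (b i).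
Definition tIsA_eq_A : Prop :=
  forall a, exists n (y : 'I_n -> B) (b : 'I_n -> A),
    (forall i, in_Is (y i)) /\ a = \sum_(i < n) tL (y i) (b i).

Definition left_counit (eps : A -> B) : Prop :=
  [/\ is_linear_map eps,
      (forall x a, eps (sL x a) = mB x (eps a)),
      (forall y a, eps (tL y a) = mB (eps a) y),
      (forall a b (w : ftensor A), eqQ (T_rho [:: (a, b)]) w ->
          \sum_(q <- w) tL (eps q.1) q.2 = mA a b) &
      (forall a b (w : ftensor A), eqQ (T_lambda [:: (a, b)]) w ->
          \sum_(q <- w) sL (eps q.2) q.1 = mA b a)].

End Bialgebroid.

(* Main.v *)
Require Import Defs.
From mathcomp Require Import all_boot all_algebra.
From mathcomp Require Import complex Rstruct.
From mathcomp Require Import boolp classical_sets.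
From Stdlib Require Import ClassicalEpsilon.
Import GRing.Theory.
Set Implicit Arguments.
Unset Strict Implicit.
Unset Printing Implicit Defensive.
Local Open Scope ring_scope.

Section Lin.
Variables (V W : lmodType CC) (f : V -> W).
Hypothesis fl : is_linear_map f.
Lemma lin0 : f 0 = 0.
Proof. have H := fl 1 0 0; rewrite !scale1r addr0 in H; by apply: (addrI (f 0)); rewrite -H addr0. Qed.
Lemma linD a b : f (a + b) = f a + f b.
Proof. by have := fl 1 a b; rewrite !scale1r. Qed.
Lemma linZ k a : f (k *: a) = k *: f a.
Proof. by have := fl k a 0; rewrite !addr0 lin0 addr0. Qed.
Lemma linN a : f (- a) = - f a.
Proof. by rewrite -scaleN1r linZ scaleN1r. Qed.
Lemma linB a b : f (a - b) = f a - f b.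
Proof. by rewrite linD linN. Qed.
Lemma lin_sumS (I : Type) (s : seq I) (F : I -> V) :
  f (\sum_(i <- s) F i) = \sum_(i <- s) f (F i).
Proof. exact: (big_morph f linD lin0). Qed.
Lemma lin_sumI n (F : 'I_n -> V) : f (\sum_(i < n) F i) = \sum_(i < n) f (F i).
Proof. exact: (big_morph f linD lin0). Qed.
End Lin.

Section Sep.
Variable V : lmodType CC.
Local Open Scope classical_set_scope.

Lemma sep_ne (v : V) : v != 0 -> exists f : V -> CC, is_linear_map f /\ f v = 1.
Proof.
move=> v0.
pose P (X : set V) := (forall k a b, X a -> X b -> X (k *: a + b)) /\ ~ X v.
have [W [[Wc Wv] Wmax]] : exists W, P W /\ forall B, W `<` B -> ~ P B.
  apply: Zorn_bigcup => F FP Ftot; split.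
    move=> k a b [X FX Xa] [Y FY Yb].
    have [XY|YX] := Ftot _ _ FX FY.
      exists Y => //; apply: (FP _ FY).1 => //; exact: XY.
    exists X => //; apply: (FP _ FX).1 => //; exact: YX.
  by move=> [X FX Xv]; exact: (FP _ FX).2.
have W0 : W 0.
  apply: contrapT => W0; apply: (Wmax [set 0]); last first.
    split; first by move=> k a b -> ->; rewrite scaler0 addr0.
    by move=> /= ev; rewrite -ev eqxx in v0.
  split; first by move=> x Wx; exfalso; apply: W0; have := Wc (-1) x x Wx Wx; rewrite scaleN1r addNr.
  by move=> /(_ 0 erefl).
have WN a : W a -> W (- a).
  by move=> Wa; rewrite -[- a]addr0 -scaleN1r; apply: Wc.
have WD a b : W a -> W b -> W (a + b).
  by move=> Wa Wb; rewrite -[a]scale1r; apply: Wc.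
have WZ k a : W a -> W (k *: a).
  by move=> Wa; rewrite -[_ *: a]addr0; apply: Wc.
have dec u : exists c, W (u - c *: v).
  case: (pselect (W u)) => Wu; first by exists 0; rewrite scale0r subr0.
  pose W' := [set x | exists w k, W w /\ x = w + k *: u].
  have HWW : W `<` W'.
    split; first by move=> x Wx; exists x, 0; rewrite scale0r addr0.
    move=> /(_ u) H; apply: Wu; apply: H; exists 0, 1; rewrite scale1r add0r.
    by split.
  have nP : ~ P W' by apply: Wmax.
  move: nP => /not_andP [] H.
    exfalso; apply: H => k a b [w1 [k1 [W1 ->]]] [w2 [k2 [W2 ->]]].
    exists (k *: w1 + w2), (k * k1 + k2); split; first exact: Wc.
    by rewrite scalerDr scalerDl scalerA addrACA.
  move/contrapT: H => [w [k [Ww ev]]].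
  have k0 : k != 0.
    by apply/eqP => k0; apply: Wv; rewrite ev k0 scale0r addr0.
  exists k^-1; rewrite ev.
  have -> : u - k^-1 *: (w + k *: u) = - (k^-1 *: w).
    by rewrite scalerDr scalerA mulVf // scale1r opprD addrCA subrr addr0.
  by apply: WN; apply: WZ.
have uniq u c c' : W (u - c *: v) -> W (u - c' *: v) -> c = c'.
  move=> H1 H2; apply: contrapT => /eqP cc.
  apply: Wv.
  have := WZ ((c - c') ^-1) _ (WD _ _ H2 (WN _ H1)).
  have -> : (u - c' *: v) + - (u - c *: v) = (c - c') *: v.
    by rewrite scalerBl opprB addrC addrA subrK.
  rewrite scalerA mulVf ?scale1r //.
  by rewrite subr_eq0.
pose g u := proj1_sig (constructive_indefinite_description _ (dec u)).
have gP u : W (u - g u *: v) by rewrite /g; case: constructive_indefinite_description.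
exists g; split.
  move=> k a a'; apply: (uniq (k *: a + a')); first exact: gP.
  have := WD _ _ (WZ k _ (gP a)) (gP a').
  by rewrite scalerBr scalerDl scalerA addrACA opprD.
apply: (uniq v); first exact: gP.
by rewrite scale1r subrr.
Qed.

Lemma sep (v : V) : (forall f : V -> CC, is_linear_map f -> f v = 0) -> v = 0.
Proof.
move=> H; apply/eqP; apply: contrapT => /negP v0.
have [f [fl fv]] := sep_ne v0.
by move: (H f fl); rewrite fv => /eqP; rewrite oner_eq0.
Qed.
End Sep.


Section Tens.
Variable A : lmodType CC.

Definition sumG (V : lmodType CC) (G : A -> A -> V) (u : ftensor A) : V :=
  \sum_(p <- u) G p.1 p.2.
Definition sumG3 (V : lmodType CC) (G : A -> A -> A -> V) (u : ftensor3 A) : V :=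
  \sum_(p <- u) G p.1.1 p.1.2 p.2.

Definition bilin (V : lmodType CC) (G : A -> A -> V) :=
  (forall (k : CC) a a' b, G (k *: a + a') b = k *: G a b + G a' b) /\
  (forall (k : CC) a b b', G a (k *: b + b') = k *: G a b + G a b').
Definition trilin (V : lmodType CC) (G : A -> A -> A -> V) :=
  [/\ (forall (k : CC) a a' b c, G (k *: a + a') b c = k *: G a b c + G a' b c),
      (forall (k : CC) a b b' c, G a (k *: b + b') c = k *: G a b c + G a b' c) &
      (forall (k : CC) a b c c', G a b (k *: c + c') = k *: G a b c + G a b c')].

Lemma sumG_cat (V : lmodType CC) (G : A -> A -> V) u v : sumG G (u ++ v) = sumG G u + sumG G v.
Proof. by rewrite /sumG big_cat. Qed.
Lemma sumG_nil (V : lmodType CC) (G : A -> A -> V) : sumG G [::] = 0.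
Proof. by rewrite /sumG big_nil. Qed.
Lemma sumG_cons (V : lmodType CC) (G : A -> A -> V) p u : sumG G (p :: u) = G p.1 p.2 + sumG G u.
Proof. by rewrite /sumG big_cons. Qed.
Lemma sumG1 (V : lmodType CC) (G : A -> A -> V) a b : sumG G [:: (a, b)] = G a b.
Proof. by rewrite sumG_cons sumG_nil addr0. Qed.

Lemma bilin_f (V : lmodType CC) (G : A -> A -> V) (f : V -> CC) :
  bilin G -> is_linear_map f -> bilinear_form (fun a b => f (G a b)).
Proof.
move=> [G1 G2] fl; split=> k *; first by rewrite G1 fl /GRing.scale /=.
by rewrite G2 fl.
Qed.

Lemma trilin_f (V : lmodType CC) (G : A -> A -> A -> V) (f : V -> CC) :
  trilin G -> is_linear_map f -> trilinear_form (fun a b c => f (G a b c)).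
Proof.
move=> [G1 G2 G3] fl; split=> k *; first by rewrite G1 fl.
  by rewrite G2 fl.
by rewrite G3 fl.
Qed.

Lemma qeq2_sum bal (V : lmodType CC) (G : A -> A -> V) u v :
  bilin G -> (forall f : V -> CC, is_linear_map f -> bal (fun a b => f (G a b))) ->
  qeq2 bal u v -> sumG G u = sumG G v.
Proof.
move=> Gl Gb uv; apply/eqP; rewrite -subr_eq0; apply/eqP; apply: sep => f fl.
rewrite (linB fl) /sumG !(lin_sumS fl).
have := uv _ (bilin_f Gl fl) (Gb f fl); rewrite /eval2 => ->.
by rewrite subrr.
Qed.

Lemma qeq3_sum bal (V : lmodType CC) (G : A -> A -> A -> V) u v :
  trilin G -> (forall f : V -> CC, is_linear_map f -> bal (fun a b c => f (G a b c))) ->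
  qeq3 bal u v -> sumG3 G u = sumG3 G v.
Proof.
move=> Gl Gb uv; apply/eqP; rewrite -subr_eq0; apply/eqP; apply: sep => f fl.
rewrite (linB fl) /sumG3 !(lin_sumS fl).
have := uv _ (trilin_f Gl fl) (Gb f fl); rewrite /eval3 => ->.
by rewrite subrr.
Qed.

Section Q.
Variable bal : (A -> A -> CC) -> Prop.
Local Notation qq := (qeq2 bal).
Lemma qrefl u : qq u u. Proof. by []. Qed.
Lemma qsym u v : qq u v -> qq v u. Proof. by move=> H phi p b; rewrite H. Qed.
Lemma qtrans u v w : qq u v -> qq v w -> qq u w.
Proof. by move=> H1 H2 phi p b; rewrite H1 // H2. Qed.
Lemma qcat u u' v v' : qq u u' -> qq v v' -> qq (u ++ v) (u' ++ v').
Proof. by move=> H1 H2 phi p b; rewrite /eval2 !big_cat /= -!/(eval2 _ _) H1 // H2. Qed.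

Lemma bform0 (phi : A -> A -> CC) : bilinear_form phi -> forall b, phi 0 b = 0.
Proof.
move=> [H _] b; have := H 1 0 0 b; rewrite scale1r addr0 mul1r => e.
by apply: (addrI (phi 0 b)); rewrite -e addr0.
Qed.
Lemma bformZ (phi : A -> A -> CC) : bilinear_form phi -> forall k a b, phi (k *: a) b = k * phi a b.
Proof. by move=> Hp k a b; have := Hp.1 k a 0 b; rewrite addr0 bform0 // addr0. Qed.

Lemma eval2_tscale (phi : A -> A -> CC) k u : bilinear_form phi -> eval2 phi (tscale k u) = k * eval2 phi u.
Proof.
move=> Hp; rewrite /eval2 /tscale big_map mulr_sumr; apply: eq_bigr => p _ /=.
exact: bformZ.
Qed.
Lemma qtscale k u v : qq u v -> qq (tscale k u) (tscale k v).
Proof. by move=> H phi p b; rewrite !eval2_tscale // H. Qed.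

Lemma qlin1 k a a' b : qq [:: (k *: a + a', b)] (tscale k [:: (a, b)] ++ [:: (a', b)]).
Proof.
move=> phi Hp _; rewrite /eval2 /= !big_cons !big_nil /= !addr0 Hp.1.
by rewrite (bformZ Hp).
Qed.
Lemma qlin2 k a b b' : qq [:: (a, k *: b + b')] (tscale k [:: (a, b)] ++ [:: (a, b')]).
Proof.
move=> phi Hp _; rewrite /eval2 /= !big_cons !big_nil /= !addr0 Hp.2.
by rewrite (bformZ Hp).
Qed.

Lemma qcancel_self u : qq u (u ++ u) -> qq u [::].
Proof.
move=> H phi p b; have := H phi p b; rewrite /eval2 big_cat big_nil /=.
set x := \sum_(_ <- u) _ => e.
have : x + x - x = x - x by rewrite -e.
by rewrite addrK subrr.
Qed.
End Q.

Lemma sumG_tscale (V : lmodType CC) (G : A -> A -> V) k u : bilin G -> sumG G (tscale k u) = k *: sumG G u.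
Proof.
move=> [G1 _]; rewrite /sumG /tscale big_map scaler_sumr; apply: eq_bigr => p _ /=.
have e : forall b, G 0 b = 0.
  move=> b; have := G1 1 0 0 b; rewrite !scale1r addr0 => e.
  by apply: (addrI (G 0 b)); rewrite -e addr0.
by have := G1 k p.1 0 p.2; rewrite addr0 e addr0.
Qed.

Lemma sumG_flatten (V : lmodType CC) (G : A -> A -> V) (s : seq (ftensor A)) :
  sumG G (flatten s) = \sum_(w <- s) sumG G w.
Proof. by rewrite /sumG big_flatten. Qed.

End Tens.


Section BA.
Variables (A B : lmodType CC) (mA : A -> A -> A) (mB : B -> B -> B).
Variables (sL sR tL tR : B -> A -> A) (D1 D2 : A -> A -> ftensor A).
Hypothesis H : left_multiplier_bialgebroid mA mB sL sR tL tR D1 D2.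

Local Notation Q := (eqQ sL tL).
Local Notation Dact := (Dact mA D1).
Local Notation rmul1 := (rmul1 mA).
Local Notation rmul2 := (rmul2 mA).

Lemma mAl b : is_linear_map (fun a => mA a b).
Proof. by case: (lmb_algA H) => H1 _ _ k a a'; rewrite H1. Qed.
Lemma mAr a : is_linear_map (mA a).
Proof. by case: (lmb_algA H) => _ H1 _ k b b'; rewrite H1. Qed.
Lemma mAA a b c : mA a (mA b c) = mA (mA a b) c.
Proof. by case: (lmb_algA H). Qed.
Lemma sLl x : is_linear_map (sL x). Proof. by case: (lmb_sM H x). Qed.
Lemma tLl x : is_linear_map (tL x). Proof. by case: (lmb_tM H x). Qed.
Lemma sLm x a b : sL x (mA a b) = mA (sL x a) b. Proof. by case: (lmb_sM H x). Qed.
Lemma tLm x a b : tL x (mA a b) = mA (tL x a) b. Proof. by case: (lmb_tM H x). Qed.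
Lemma sRm x a b : mA (sR x a) b = mA a (sL x b). Proof. by case: (lmb_sM H x). Qed.
Lemma tRm x a b : mA (tR x a) b = mA a (tL x b). Proof. by case: (lmb_tM H x). Qed.
Lemma sLB a : is_linear_map (fun x => sL x a).
Proof. by move=> k x y; rewrite (lmb_s_lin H). Qed.
Lemma tLB a : is_linear_map (fun x => tL x a).
Proof. by move=> k x y; rewrite (lmb_t_lin H). Qed.
Lemma st_comm x y a : sL x (tL y a) = tL y (sL x a). Proof. exact: (lmb_st_comm H). Qed.
Lemma s_mul x y a : sL (mB x y) a = sL x (sL y a). Proof. exact: (lmb_s_mul H). Qed.
Lemma t_mul x y a : tL (mB x y) a = tL y (tL x a). Proof. exact: (lmb_t_antimul H). Qed.

Lemma eval2_cat (phi : A -> A -> CC) u v : eval2 phi (u ++ v) = eval2 phi u + eval2 phi v.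
Proof. by rewrite /eval2 big_cat. Qed.
Lemma eval2_cons (phi : A -> A -> CC) p u : eval2 phi (p :: u) = phi p.1 p.2 + eval2 phi u.
Proof. by rewrite /eval2 big_cons. Qed.
Lemma eval2_nil (phi : A -> A -> CC) : eval2 phi [::] = 0.
Proof. by rewrite /eval2 big_nil. Qed.

Lemma Qbal x a b : Q [:: (sL x a, b)] [:: (a, tL x b)].
Proof. by move=> phi _ Hb; rewrite /eval2 !big_cons !big_nil /= Hb. Qed.

Lemma eval2_map (phi : A -> A -> CC) (f : A * A -> A * A) u :
  eval2 phi (map f u) = eval2 (fun a b => phi (f (a, b)).1 (f (a, b)).2) u.
Proof. by rewrite /eval2 big_map; apply: eq_bigr => -[]. Qed.

Lemma Qmap (f : A * A -> A * A) u v :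
  (forall phi, bilinear_form phi -> balQ sL tL phi ->
     bilinear_form (fun a b => phi (f (a, b)).1 (f (a, b)).2) /\
     balQ sL tL (fun a b => phi (f (a, b)).1 (f (a, b)).2)) ->
  Q u v -> Q (map f u) (map f v).
Proof.
move=> Hf uv phi Hp Hb; rewrite !eval2_map.
by have [H1 H2] := Hf phi Hp Hb; apply: uv.
Qed.

Lemma rmul1_resp u v a : Q u v -> Q (rmul1 u a) (rmul1 v a).
Proof.
apply: Qmap => phi [H1 H2] Hb /=; split; first split.
- by move=> k p p' q; rewrite (mAl a) H1.
- by move=> k p q q'; rewrite H2.
- by move=> x p q; rewrite -sLm Hb.
Qed.

Lemma rmul2_resp u v a : Q u v -> Q (rmul2 u a) (rmul2 v a).
Proof.
apply: Qmap => phi [H1 H2] Hb /=; split; first split.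
- by move=> k p p' q; rewrite H1.
- by move=> k p q q'; rewrite (mAl a) H2.
- by move=> x p q; rewrite Hb tLm.
Qed.

Lemma lmulT_resp (L1 L2 : A -> A) u v :
  is_linear_map L1 -> is_linear_map L2 ->
  (forall x a, L1 (sL x a) = sL x (L1 a)) -> (forall x b, L2 (tL x b) = tL x (L2 b)) ->
  Q u v -> Q (lmulT L1 L2 u) (lmulT L1 L2 v).
Proof.
move=> l1 l2 c1 c2; apply: Qmap => phi [H1 H2] Hb /=; split; first split.
- by move=> k p p' q; rewrite (l1 k p p'); apply: H1.
- by move=> k p q q'; rewrite (l2 k q q'); apply: H2.
- by move=> x p q; rewrite c1 c2 Hb.
Qed.

Lemma Qflat (X : Type) (f g : X -> ftensor A) s :
  (forall x, Q (f x) (g x)) -> Q (flatten (map f s)) (flatten (map g s)).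
Proof. by move=> fg; elim: s => [|x s IH] //=; apply: qcat; [apply: fg|exact: IH]. Qed.

Lemma rmul1_cat u v a : rmul1 (u ++ v) a = rmul1 u a ++ rmul1 v a.
Proof. exact: map_cat. Qed.
Lemma rmul2_cat u v a : rmul2 (u ++ v) a = rmul2 u a ++ rmul2 v a.
Proof. exact: map_cat. Qed.
Lemma lmulT_cat (L1 L2 : A -> A) u v : lmulT L1 L2 (u ++ v) = lmulT L1 L2 u ++ lmulT L1 L2 v.
Proof. exact: map_cat. Qed.
Lemma rmul2_tscale k u a : rmul2 (tscale k u) a = tscale k (rmul2 u a).
Proof. by rewrite /rmul2 /tscale -!map_comp. Qed.

Lemma mAZl k a b : mA (k *: a) b = k *: mA a b.
Proof. exact: (linZ (mAl b)). Qed.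
Lemma mAZr k a b : mA a (k *: b) = k *: mA a b.
Proof. exact: (linZ (mAr a)). Qed.

Lemma rmul1_tscale k u a : Q (rmul1 (tscale k u) a) (tscale k (rmul1 u a)).
Proof.
move=> phi Hp _; rewrite /eval2 /Defs.rmul1 /tscale !big_map; apply: eq_bigr => p _ /=.
by rewrite mAZl.
Qed.

Lemma rmul1_lin X k a a' : Q (rmul1 X (k *: a + a')) (tscale k (rmul1 X a) ++ rmul1 X a').
Proof.
move=> phi Hp _; rewrite eval2_cat /eval2 /tscale /Defs.rmul1 !big_map -big_split.
apply: eq_bigr => p _ /=.
by rewrite (mAr p.1) Hp.1 (bformZ Hp).
Qed.

Lemma rmul2_lin X k a a' : Q (rmul2 X (k *: a + a')) (tscale k (rmul2 X a) ++ rmul2 X a').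
Proof.
move=> phi Hp _; rewrite eval2_cat /eval2 /tscale /Defs.rmul2 !big_map -big_split.
apply: eq_bigr => p _ /=.
by rewrite (mAr p.2) Hp.2 (bformZ Hp).
Qed.

Lemma tscale1 u : Q (tscale 1 u) u.
Proof. by move=> phi Hp _; rewrite eval2_tscale // mul1r. Qed.

Lemma Dact1 c a b : Dact c [:: (a, b)] = rmul2 (D1 c a) b.
Proof. by rewrite /Defs.Dact /= cats0. Qed.
Lemma Dact_cat c u v : Dact c (u ++ v) = Dact c u ++ Dact c v.
Proof. by rewrite /Defs.Dact map_cat flatten_cat. Qed.

Lemma linF0 (F : A -> ftensor A) :
  (forall k x y, Q (F (k *: x + y)) (tscale k (F x) ++ F y)) -> Q (F 0) [::].
Proof.
move=> HF; apply: qcancel_self; apply: (qtrans (v := tscale 1 (F 0) ++ F 0)).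
  by have := HF 1 0 0; rewrite scale1r addr0.
by apply: qcat => //; apply: tscale1.
Qed.
Lemma linFZ (F : A -> ftensor A) :
  (forall k x y, Q (F (k *: x + y)) (tscale k (F x) ++ F y)) ->
  forall k x, Q (F (k *: x)) (tscale k (F x)).
Proof.
move=> HF k x; apply: (qtrans (v := tscale k (F x) ++ [::])).
  by have := HF k x 0; rewrite addr0 => /qtrans; apply; apply: qcat => //; apply: linF0.
by rewrite cats0.
Qed.
Lemma linFD (F : A -> ftensor A) :
  (forall k x y, Q (F (k *: x + y)) (tscale k (F x) ++ F y)) ->
  forall x y, Q (F (x + y)) (F x ++ F y).
Proof.
move=> HF x y; have := HF 1 x y; rewrite scale1r => /qtrans; apply.
by apply: qcat => //; apply: tscale1.
Qed.

Lemma Dact_lin k c c' u : Q (Dact (k *: c + c') u) (tscale k (Dact c u) ++ Dact c' u).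
Proof. exact: (lmb_D_lin H). Qed.
Lemma Dact0 u : Q (Dact 0 u) [::].
Proof. apply: (linF0 (F := fun c => Dact c u)) => k x y; apply: Dact_lin. Qed.
Lemma DactZ k c u : Q (Dact (k *: c) u) (tscale k (Dact c u)).
Proof. apply: (linFZ (F := fun c => Dact c u)) => k' x y; apply: Dact_lin. Qed.
Lemma DactD c c' u : Q (Dact (c + c') u) (Dact c u ++ Dact c' u).
Proof. apply: (linFD (F := fun c => Dact c u)) => k' x y; apply: Dact_lin. Qed.

Lemma compat c a b : Q (rmul2 (D1 c a) b) (rmul1 (D2 c b) a).
Proof. exact: (lmb_D_compat H). Qed.

Lemma Qcancel1 X Y : (forall a, Q (rmul1 X a) (rmul1 Y a)) -> Q X Y.
Proof.
move=> HXY; pose W := X ++ tscale (-1) Y.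
have HW : Q W [::].
  apply: (lmb_Q_nondeg1 H) => a phi Hp Hb.
  rewrite /W rmul1_cat eval2_cat.
  rewrite (rmul1_tscale (-1) Y a Hp Hb) eval2_tscale // (HXY a phi Hp Hb).
  by rewrite mulN1r subrr eval2_nil.
move=> phi Hp Hb; have := HW phi Hp Hb.
rewrite /W eval2_cat eval2_nil eval2_tscale // mulN1r.
by move/eqP; rewrite subr_eq0 => /eqP.
Qed.

Lemma Qcancel2 X Y : (forall a, Q (rmul2 X a) (rmul2 Y a)) -> Q X Y.
Proof.
move=> HXY; pose W := X ++ tscale (-1) Y.
have HW : Q W [::].
  apply: (lmb_Q_nondeg2 H) => a phi Hp Hb.
  rewrite /W rmul2_cat rmul2_tscale eval2_cat.
  rewrite eval2_tscale // (HXY a phi Hp Hb).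
  by rewrite mulN1r subrr eval2_nil.
move=> phi Hp Hb; have := HW phi Hp Hb.
rewrite /W eval2_cat eval2_nil eval2_tscale // mulN1r.
by move/eqP; rewrite subr_eq0 => /eqP.
Qed.

Lemma D2lin k c c' b : Q (D2 (k *: c + c') b) (tscale k (D2 c b) ++ D2 c' b).
Proof.
apply: Qcancel1 => a.
apply: (qtrans (qsym (compat _ _ _))); rewrite -Dact1.
apply: (qtrans (Dact_lin _ _ _ _)); rewrite !Dact1.
apply: (qtrans (v := tscale k (rmul1 (D2 c b) a) ++ rmul1 (D2 c' b) a)).
  by apply: qcat; [apply: qtscale|]; apply: compat.
rewrite rmul1_cat; apply: qcat => //; apply: qsym; apply: rmul1_tscale.
Qed.

Lemma D1linc k c c' a : Q (D1 (k *: c + c') a) (tscale k (D1 c a) ++ D1 c' a).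
Proof.
apply: Qcancel2 => b; rewrite -Dact1.
apply: (qtrans (Dact_lin _ _ _ _)); rewrite !Dact1 rmul2_cat rmul2_tscale //.
Qed.

Lemma D1lina k c a a' : Q (D1 c (k *: a + a')) (tscale k (D1 c a) ++ D1 c a').
Proof.
apply: Qcancel2 => b.
apply: (qtrans (compat _ _ _)); apply: (qtrans (rmul1_lin _ _ _ _)).
rewrite rmul2_cat rmul2_tscale.
by apply: qcat; [apply: qtscale|]; apply: qsym; apply: compat.
Qed.


Lemma sumP (P : A -> Prop) : P 0 -> (forall a b, P a -> P b -> P (a + b)) ->
  forall n (F : 'I_n -> A), (forall i, P (F i)) -> P (\sum_(i < n) F i).
Proof. by move=> P0 PD n F PF; apply: (big_ind P) => // i _; apply: PF. Qed.

Lemma decomp_ind (P : A -> Prop) : P 0 -> (forall a b, P a -> P b -> P (a + b)) ->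
  (forall x y y' x' d g, P (mA (sL x (tL y (tR y' (sR x' d)))) g)) -> forall c, P c.
Proof.
move=> P0 PD Pg.
have S1 x y d x' y' g : P (sL x (tL y (mA (tR y' (sR x' d)) g))) by rewrite tLm sLm.
have S2 x y d x' f : P (sL x (tL y (mA (sR x' d) f))).
  have [n [ys [gs ->]]] := lmb_tBA H f.
  rewrite (lin_sumI (mAr _)) (lin_sumI (tLl y)) (lin_sumI (sLl x)).
  by apply: sumP => // i; rewrite -tRm.
have S3 x y d e : P (sL x (tL y (mA d e))).
  have [n [ys [gs ->]]] := lmb_sBA H e.
  rewrite (lin_sumI (mAr _)) (lin_sumI (tLl y)) (lin_sumI (sLl x)).
  by apply: sumP => // i; rewrite -sRm.
have S4 x y c : P (sL x (tL y c)).
  have [n [bs [cs ->]]] := lmb_idemA H c.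
  rewrite (lin_sumI (tLl y)) (lin_sumI (sLl x)).
  by apply: sumP.
have S5 x c : P (sL x c).
  have [n [ys [cs ->]]] := lmb_tBA H c.
  rewrite (lin_sumI (sLl x)).
  by apply: sumP.
move=> c; have [n [ys [cs ->]]] := lmb_sBA H c.
by apply: sumP.
Qed.

Local Notation lmulT := (@lmulT A).

Lemma qeq_of_eq u v : u = v -> Q u v. Proof. by move=> ->. Qed.

Lemma Dgen x y y' x' d g u :
  Q (Dact (mA (sL x (tL y (tR y' (sR x' d)))) g) u)
    (lmulT (tL y) (sL x) (Dact d (lmulT (tL y') (sL x') (Dact g u)))).
Proof.
apply: (qtrans (lmb_D_mul H _ _ _)); exact: (lmb_D_bimod H).
Qed.

Lemma id_lin : is_linear_map (@id A). Proof. by []. Qed.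

Lemma lmulT_t y0 u v : Q u v -> Q (lmulT (tL y0) id u) (lmulT (tL y0) id v).
Proof.
apply: lmulT_resp; [exact: tLl|exact: id_lin| |by []].
by move=> x a; rewrite st_comm.
Qed.
Lemma lmulT_s z u v : Q u v -> Q (lmulT id (sL z) u) (lmulT id (sL z) v).
Proof.
apply: lmulT_resp; [exact: id_lin|exact: sLl|by []|].
by move=> x a; rewrite st_comm.
Qed.
Lemma lmulT_ts y x u v : Q u v -> Q (lmulT (tL y) (sL x) u) (lmulT (tL y) (sL x) v).
Proof.
apply: lmulT_resp; [exact: tLl|exact: sLl| |]; by move=> x' a; rewrite st_comm.
Qed.

Lemma Good_t y0 c u : Q (Dact (tL y0 c) u) (lmulT (tL y0) id (Dact c u)).
Proof.
elim/decomp_ind: c u => [u|a b IHa IHb u|x y y' x' d g u].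
- rewrite (lin0 (tLl y0)); apply: (qtrans (Dact0 _)).
  apply: qsym; apply: (qtrans (lmulT_t y0 (Dact0 u))); by [].
- rewrite (linD (tLl y0)); apply: (qtrans (DactD _ _ _)).
  apply: qsym; apply: (qtrans (lmulT_t y0 (DactD _ _ _))); rewrite lmulT_cat.
  by apply: qcat; apply: qsym; [exact: IHa|exact: IHb].
- rewrite tLm -st_comm -t_mul; apply: (qtrans (Dgen _ _ _ _ _ _ _)).
  apply: qsym; apply: (qtrans (lmulT_t y0 (Dgen _ _ _ _ _ _ _))).
  apply: qeq_of_eq; rewrite /Defs.lmulT -map_comp; apply: eq_map => p /=; by rewrite t_mul.
Qed.


Lemma Good_s z c u : Q (Dact (sL z c) u) (lmulT id (sL z) (Dact c u)).
Proof.
elim/decomp_ind: c u => [u|a b IHa IHb u|x y y' x' d g u].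
- rewrite (lin0 (sLl z)); apply: (qtrans (Dact0 _)).
  apply: qsym; apply: (qtrans (lmulT_s z (Dact0 u))); by [].
- rewrite (linD (sLl z)); apply: (qtrans (DactD _ _ _)).
  apply: qsym; apply: (qtrans (lmulT_s z (DactD _ _ _))); rewrite lmulT_cat.
  by apply: qcat; apply: qsym; [exact: IHa|exact: IHb].
- rewrite sLm -s_mul; apply: (qtrans (Dgen _ _ _ _ _ _ _)).
  apply: qsym; apply: (qtrans (lmulT_s z (Dgen _ _ _ _ _ _ _))).
  apply: qeq_of_eq; rewrite /Defs.lmulT -map_comp; apply: eq_map => p /=; by rewrite s_mul.
Qed.

Lemma D2t y a b : Q (D2 (tL y a) b) (lmulT (tL y) id (D2 a b)).
Proof.
apply: Qcancel1 => c.
apply: (qtrans (qsym (compat _ _ _))); rewrite -Dact1.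
apply: (qtrans (Good_t _ _ _)); rewrite Dact1.
apply: (qtrans (lmulT_t y (compat _ _ _))).
apply: qeq_of_eq; rewrite /Defs.lmulT /Defs.rmul1 -!map_comp; apply: eq_map => p /=.
by rewrite tLm.
Qed.

Lemma D1s z p a : Q (D1 (sL z p) a) (lmulT id (sL z) (D1 p a)).
Proof.
apply: Qcancel2 => b; rewrite -Dact1.
apply: (qtrans (Good_s _ _ _)); rewrite Dact1.
apply: qeq_of_eq; rewrite /Defs.lmulT /Defs.rmul2 -!map_comp; apply: eq_map => q /=.
by rewrite sLm.
Qed.

Lemma D2_0 b : Q (D2 0 b) [::].
Proof. by apply: (linF0 (F := fun c => D2 c b)) => k x y; apply: D2lin. Qed.
Lemma D2Z k c b : Q (D2 (k *: c) b) (tscale k (D2 c b)).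
Proof. by apply: (linFZ (F := fun c => D2 c b)) => k' x y; apply: D2lin. Qed.
Lemma D1_0 c : Q (D1 c 0) [::].
Proof. by apply: (linF0 (F := fun a => D1 c a)) => k x y; apply: D1lina. Qed.
Lemma D1Z k c a : Q (D1 c (k *: a)) (tscale k (D1 c a)).
Proof. by apply: (linFZ (F := fun a => D1 c a)) => k' x y; apply: D1lina. Qed.


Lemma bilin_mA : bilin mA.
Proof. by split=> k *; [rewrite (mAl _)|rewrite (mAr _)]. Qed.
Lemma bilin_mop : bilin (fun a b => mA b a).
Proof. by split=> k *; [rewrite (mAr _)|rewrite (mAl _)]. Qed.

Lemma tscale_flatten k (s : seq (ftensor A)) : tscale k (flatten s) = flatten (map (tscale k) s).
Proof. exact: map_flatten. Qed.
Lemma lmulT_flatten (L1 L2 : A -> A) (s : seq (ftensor A)) :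
  lmulT L1 L2 (flatten s) = flatten (map (lmulT L1 L2) s).
Proof. exact: map_flatten. Qed.

Hypothesis HL : qbijective (eq_lambda tL tR) (eqQ sL tL) (T_lambda D1).
Hypothesis HR : qbijective (eq_rho sL sR) (eqQ sL tL) (T_rho D2).

Lemma HRs w : exists u, Q (T_rho D2 u) w. Proof. by case: HR. Qed.
Lemma HLs w : exists u, Q (T_lambda D1 u) w. Proof. by case: HL. Qed.
Definition preR w := proj1_sig (constructive_indefinite_description _ (HRs w)).
Definition preL w := proj1_sig (constructive_indefinite_description _ (HLs w)).
Lemma preRP w : Q (T_rho D2 (preR w)) w.
Proof. by rewrite /preR; case: constructive_indefinite_description. Qed.
Lemma preLP w : Q (T_lambda D1 (preL w)) w.
Proof. by rewrite /preL; case: constructive_indefinite_description. Qed.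

Definition E w := sumG mA (preR w).
Definition El w := sumG (fun a b => mA b a) (preL w).

Lemma sumM_rho u v : eq_rho sL sR u v -> sumG mA u = sumG mA v.
Proof.
apply: qeq2_sum; first exact: bilin_mA.
by move=> f fl x a b; rewrite sRm.
Qed.
Lemma sumM_lam u v : eq_lambda tL tR u v -> sumG (fun a b => mA b a) u = sumG (fun a b => mA b a) v.
Proof.
apply: qeq2_sum; first exact: bilin_mop.
by move=> f fl x a b /=; rewrite tRm.
Qed.

Lemma E_spec u w : Q (T_rho D2 u) w -> E w = sumG mA u.
Proof.
move=> uw; apply: sumM_rho; case: HR => _ inj _; apply: inj.
by apply: (qtrans (preRP w)); apply: qsym.
Qed.
Lemma El_spec u w : Q (T_lambda D1 u) w -> El w = sumG (fun a b => mA b a) u.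
Proof.
move=> uw; apply: sumM_lam; case: HL => _ inj _; apply: inj.
by apply: (qtrans (preLP w)); apply: qsym.
Qed.
Lemma E_resp w w' : Q w w' -> E w = E w'.
Proof. by move=> ww; apply: E_spec; apply: (qtrans (preRP w')); apply: qsym. Qed.
Lemma El_resp w w' : Q w w' -> El w = El w'.
Proof. by move=> ww; apply: El_spec; apply: (qtrans (preLP w')); apply: qsym. Qed.

Lemma T_rho_cat u v : T_rho D2 (u ++ v) = T_rho D2 u ++ T_rho D2 v.
Proof. by rewrite /T_rho map_cat flatten_cat. Qed.
Lemma T_lam_cat u v : T_lambda D1 (u ++ v) = T_lambda D1 u ++ T_lambda D1 v.
Proof. by rewrite /T_lambda map_cat flatten_cat. Qed.

Lemma E_cat w w' : E (w ++ w') = E w + E w'.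
Proof.
rewrite (@E_spec (preR w ++ preR w')) ?sumG_cat //.
by rewrite T_rho_cat; apply: qcat; apply: preRP.
Qed.
Lemma El_cat w w' : El (w ++ w') = El w + El w'.
Proof.
rewrite (@El_spec (preL w ++ preL w')) ?sumG_cat //.
by rewrite T_lam_cat; apply: qcat; apply: preLP.
Qed.
Lemma E_nil : E [::] = 0.
Proof. by rewrite (@E_spec [::]) ?sumG_nil. Qed.
Lemma El_nil : El [::] = 0.
Proof. by rewrite (@El_spec [::]) ?sumG_nil. Qed.

Lemma E_tscale k w : E (tscale k w) = k *: E w.
Proof.
rewrite (@E_spec (tscale k (preR w))); first by rewrite sumG_tscale //; exact: bilin_mA.
apply: (qtrans (v := tscale k (T_rho D2 (preR w)))); last by apply: qtscale; apply: preRP.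
rewrite /T_rho tscale_flatten /tscale -!map_comp; apply: Qflat => p /=.
exact: D2Z.
Qed.
Lemma El_tscale k w : El (tscale k w) = k *: El w.
Proof.
rewrite (@El_spec (tscale k (preL w))); first by rewrite sumG_tscale //; exact: bilin_mop.
apply: (qtrans (v := tscale k (T_lambda D1 (preL w)))); last by apply: qtscale; apply: preLP.
rewrite /T_lambda tscale_flatten /tscale -!map_comp; apply: Qflat => p /=.
exact: D1Z.
Qed.

Definition E2 a b := E [:: (a, b)].
Definition El2 a b := El [:: (a, b)].

Lemma E_sum w : E w = \sum_(p <- w) E2 p.1 p.2.
Proof.
elim: w => [|p w IH]; first by rewrite E_nil big_nil.
by rewrite big_cons -IH -E_cat; case: p.
Qed.
Lemma El_sum w : El w = \sum_(p <- w) El2 p.1 p.2.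
Proof.
elim: w => [|p w IH]; first by rewrite El_nil big_nil.
by rewrite big_cons -IH -El_cat; case: p.
Qed.

Lemma E2l1 b : is_linear_map (fun a => E2 a b).
Proof. by move=> k a a'; rewrite /E2 (E_resp (qlin1 k a a' b)) E_cat E_tscale. Qed.
Lemma E2l2 a : is_linear_map (E2 a).
Proof. by move=> k b b'; rewrite /E2 (E_resp (qlin2 k a b b')) E_cat E_tscale. Qed.
Lemma El2l1 b : is_linear_map (fun a => El2 a b).
Proof. by move=> k a a'; rewrite /El2 (El_resp (qlin1 k a a' b)) El_cat El_tscale. Qed.
Lemma El2l2 a : is_linear_map (El2 a).
Proof. by move=> k b b'; rewrite /El2 (El_resp (qlin2 k a b b')) El_cat El_tscale. Qed.
Lemma E2bal x a b : E2 (sL x a) b = E2 a (tL x b).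
Proof. exact: E_resp (Qbal _ _ _). Qed.
Lemma El2bal x a b : El2 (sL x a) b = El2 a (tL x b).
Proof. exact: El_resp (Qbal _ _ _). Qed.

Lemma E_D2 a b : E (D2 a b) = mA a b.
Proof. by rewrite (@E_spec [:: (a, b)]) ?sumG1 // /T_rho /= cats0. Qed.
Lemma El_D1 a b : El (D1 b a) = mA b a.
Proof. by rewrite (@El_spec [:: (a, b)]) ?sumG1 // /T_lambda /= cats0. Qed.

Lemma E3 y a b : E2 (tL y a) b = tL y (E2 a b).
Proof.
pose u := preR [:: (a, b)].
rewrite /E2 (@E_spec (lmulT (tL y) id u)).
  rewrite /E /sumG /Defs.lmulT big_map (lin_sumS (tLl y)); apply: eq_bigr => p _ /=.
  by rewrite tLm.
apply: (qtrans (v := lmulT (tL y) id (T_rho D2 u))); last first.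
  exact: (lmulT_t y (preRP _)).
rewrite /T_rho lmulT_flatten /Defs.lmulT -!map_comp; apply: Qflat => p /=.
exact: D2t.
Qed.

Lemma Els z a p : El2 a (sL z p) = sL z (El2 a p).
Proof.
pose u := preL [:: (a, p)].
rewrite /El2 (@El_spec (lmulT id (sL z) u)).
  rewrite /El /sumG /Defs.lmulT big_map (lin_sumS (sLl z)); apply: eq_bigr => q _ /=.
  by rewrite sLm.
apply: (qtrans (v := lmulT id (sL z) (T_lambda D1 u))); last first.
  exact: (lmulT_s z (preLP _)).
rewrite /T_lambda lmulT_flatten /Defs.lmulT -!map_comp; apply: Qflat => q /=.
exact: D1s.
Qed.

Lemma Qresp (G : A -> A -> A) u v : bilin G -> (forall x a b, G (sL x a) b = G a (tL x b)) ->
  Q u v -> sumG G u = sumG G v.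
Proof. by move=> Gl Gb; apply: qeq2_sum => // f fl x a b; rewrite Gb. Qed.

Lemma sumG_T_rho (G : A -> A -> A) u :
  sumG G (T_rho D2 u) = \sum_(p <- u) sumG G (D2 p.1 p.2).
Proof. by rewrite /T_rho sumG_flatten big_map. Qed.
Lemma sumG_T_lam (G : A -> A -> A) u :
  sumG G (T_lambda D1 u) = \sum_(p <- u) sumG G (D1 p.2 p.1).
Proof. by rewrite /T_lambda sumG_flatten big_map. Qed.

Lemma Q_all_rho (G G' : A -> A -> A) :
  bilin G -> (forall x a b, G (sL x a) b = G a (tL x b)) ->
  bilin G' -> (forall x a b, G' (sL x a) b = G' a (tL x b)) ->
  (forall b c, sumG G (D2 b c) = sumG G' (D2 b c)) -> forall p e, G p e = G' p e.
Proof.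
move=> Gl Gb Gl' Gb' HG p e; have [u Hu] := HRs [:: (p, e)].
rewrite -(sumG1 G) -(sumG1 G') -(Qresp Gl Gb Hu) -(Qresp Gl' Gb' Hu) !sumG_T_rho.
by apply: eq_bigr => q _.
Qed.
Lemma Q_all_lam (G G' : A -> A -> A) :
  bilin G -> (forall x a b, G (sL x a) b = G a (tL x b)) ->
  bilin G' -> (forall x a b, G' (sL x a) b = G' a (tL x b)) ->
  (forall a p, sumG G (D1 p a) = sumG G' (D1 p a)) -> forall x y, G x y = G' x y.
Proof.
move=> Gl Gb Gl' Gb' HG x y; have [u Hu] := HLs [:: (x, y)].
rewrite -(sumG1 G) -(sumG1 G') -(Qresp Gl Gb Hu) -(Qresp Gl' Gb' Hu) !sumG_T_lam.
by apply: eq_bigr => q _.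
Qed.

Lemma sumG_lin (G G' : A -> A -> A) k u :
  sumG (fun a b => k *: G a b + G' a b) u = k *: sumG G u + sumG G' u.
Proof. by rewrite /sumG big_split /= scaler_sumr. Qed.

Lemma coassoc_gen (G3 : A -> A -> A -> A) (G4 : A -> A -> A) :
  trilin G3 -> (forall x a b c, G3 (sL x a) b c = G3 a (tL x b) c) ->
  (forall x a b c, G3 a (sL x b) c = G3 a b (tL x c)) ->
  bilin G4 -> (forall x a b, G4 (sL x a) b = G4 a (tL x b)) ->
  (forall u1 u2 c, sumG (G3 u1) (D2 u2 c) = G4 u1 (mA u2 c)) ->
  forall a p e, sumG (fun r1 r2 => G3 r1 r2 e) (D1 p a) = G4 (mA p a) e.
Proof.
move=> G3l G3b1 G3b2 G4l G4b HG a.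
have [G3l1 G3l2 G3l3] := G3l.
have Gel e : bilin (fun r1 r2 => G3 r1 r2 e).
  by split=> k *; [rewrite G3l1|rewrite G3l2].
have Geb e x r1 r2 : G3 (sL x r1) r2 e = G3 r1 (tL x r2) e by rewrite G3b1.
pose F p e := sumG (fun r1 r2 => G3 r1 r2 e) (D1 p a).
pose F' p e := G4 (mA p a) e.
apply: (@Q_all_rho F F').
- split=> k *; rewrite /F.
    rewrite (Qresp (Gel _) (Geb _) (D1linc _ _ _ _)) sumG_cat sumG_tscale //.
  rewrite -sumG_lin; apply: eq_bigr => r _; exact: G3l3.
- move=> x p e; rewrite /F (Qresp (Gel _) (Geb _) (D1s _ _ _)) /sumG /Defs.lmulT big_map.
  by apply: eq_bigr => r _ /=; rewrite G3b2.
- split; first by move=> k p p' e; rewrite /F' (mAl a) G4l.1.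
  by move=> k p e e'; rewrite /F' G4l.2.
- by move=> x p e; rewrite /F' -sLm G4b.
move=> b c.
have Hc := lmb_coassoc H (qrefl (D2 b c)) (qrefl (D1 b a)).
have := qeq3_sum (G := G3) G3l _ Hc.
have Hb3 : forall f : A -> CC, is_linear_map f -> bal3 sL tL (fun a b c => f (G3 a b c)).
  by move=> f fl; split=> *; rewrite ?G3b1 ?G3b2.
move=> /(_ Hb3).
rewrite /sumG3 !big_flatten !big_map => e.
rewrite /sumG.
transitivity (\sum_(q <- D2 b c) \sum_(r <- D1 q.1 a) G3 r.1 r.2 q.2).
  by apply: eq_bigr => q _; rewrite /F /sumG.
rewrite (eq_bigr (fun q => \sum_(i <- [seq (r.1, r.2, q.2) | r <- D1 q.1 a]) G3 i.1.1 i.1.2 i.2)); last by move=> q _; rewrite big_map.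
rewrite e (eq_bigr (fun j => G4 j.1 (mA j.2 c))); last by move=> j _; rewrite big_map -HG.
transitivity (sumG G4 (rmul2 (D1 b a) c)); first by rewrite /sumG big_map.
rewrite (Qresp G4l G4b (compat _ _ _)) /sumG big_map.
by apply: eq_bigr.
Qed.

Lemma sLB_sumS (I : Type) (r : seq I) (F : I -> B) a :
  sL (\sum_(i <- r) F i) a = \sum_(i <- r) sL (F i) a.
Proof. exact: (lin_sumS (sLB a)). Qed.
Lemma tLB_sumS (I : Type) (r : seq I) (F : I -> B) a :
  tL (\sum_(i <- r) F i) a = \sum_(i <- r) tL (F i) a.
Proof. exact: (lin_sumS (tLB a)). Qed.
Lemma sLB_sumI n (F : 'I_n -> B) a :
  sL (\sum_(i < n) F i) a = \sum_(i < n) sL (F i) a.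
Proof. exact: (lin_sumI (sLB a)). Qed.
Lemma tLB_sumI n (F : 'I_n -> B) a :
  tL (\sum_(i < n) F i) a = \sum_(i < n) tL (F i) a.
Proof. exact: (lin_sumI (tLB a)). Qed.

Section K.
Variable psi : A -> B.
Hypothesis psil : is_linear_map psi.
Hypothesis psit : forall x a, psi (tL x a) = mB (psi a) x.

Lemma K2 x y e : sL (psi (E2 y e)) x = sL (psi e) (El2 x y).
Proof.
have Gb x0 a b c : sL (psi (E2 b c)) (sL x0 a) = sL (psi (E2 (tL x0 b) c)) a.
  by rewrite E3 psit s_mul.
have CG : forall a p e, sumG (fun r1 r2 => sL (psi (E2 r2 e)) r1) (D1 p a) = sL (psi e) (mA p a).
  apply: (@coassoc_gen (fun r1 r2 r3 => sL (psi (E2 r2 r3)) r1) (fun p q => sL (psi q) p)) => //.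
- split=> k *; first by rewrite (sLl _).
    by rewrite (E2l1 _) psil (sLB _).
  by rewrite (E2l2 _) psil (sLB _).
- by move=> x0 a b c; rewrite E2bal.
- by split=> k *; [rewrite (sLl _)|rewrite psil (sLB _)].
- by move=> x0 a b; rewrite psit s_mul.
- move=> u1 u2 c; transitivity (sL (psi (E (D2 u2 c))) u1); last by rewrite E_D2.
  by rewrite E_sum (lin_sumS psil) sLB_sumS.
apply: (@Q_all_lam (fun r1 r2 => sL (psi (E2 r2 e)) r1) (fun r1 r2 => sL (psi e) (El2 r1 r2))).
- split=> k *; first by rewrite (sLl _).
  by rewrite (E2l1 _) psil (sLB _).
- by move=> x0 a b; rewrite Gb.
- by split=> k *; [rewrite (El2l1 _) (sLl _)|rewrite (El2l2 _) (sLl _)].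
- by move=> x0 a b; rewrite El2bal.
move=> a p; rewrite CG; transitivity (sL (psi e) (El (D1 p a))); first by rewrite El_D1.
by rewrite El_sum (lin_sumS (sLl _)).
Qed.
End K.

Section K'.
Variable phi : A -> B.
Hypothesis phil : is_linear_map phi.
Hypothesis phis : forall x a, phi (sL x a) = mB x (phi a).

Lemma K1 x y e : tL (phi x) (E2 y e) = tL (phi (El2 x y)) e.
Proof.
have Gb x0 a b c : tL (phi (sL x0 a)) (E2 b c) = tL (phi a) (E2 (tL x0 b) c).
  by rewrite phis t_mul E3.
have CG : forall a p e, sumG (fun r1 r2 => tL (phi r1) (E2 r2 e)) (D1 p a) = tL (phi (mA p a)) e.
  apply: (@coassoc_gen (fun r1 r2 r3 => tL (phi r1) (E2 r2 r3)) (fun p q => tL (phi p) q)) => //.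
- split=> k *; first by rewrite phil (tLB _).
    by rewrite (E2l1 _) (tLl _).
  by rewrite (E2l2 _) (tLl _).
- by move=> x0 a b c; rewrite E2bal.
- by split=> k *; [rewrite phil (tLB _)|rewrite (tLl _)].
- by move=> x0 a b; rewrite phis t_mul.
- move=> u1 u2 c; transitivity (tL (phi u1) (E (D2 u2 c))); last by rewrite E_D2.
  by rewrite E_sum (lin_sumS (tLl _)).
apply: (@Q_all_lam (fun r1 r2 => tL (phi r1) (E2 r2 e)) (fun r1 r2 => tL (phi (El2 r1 r2)) e)).
- split=> k *; first by rewrite phil (tLB _).
  by rewrite (E2l1 _) (tLl _).
- by move=> x0 a b; rewrite Gb.
- by split=> k *; [rewrite (El2l1 _) phil (tLB _)|rewrite (El2l2 _) phil (tLB _)].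
- by move=> x0 a b; rewrite El2bal.
move=> a p; rewrite CG; transitivity (tL (phi (El (D1 p a))) e); first by rewrite El_D1.
by rewrite El_sum (lin_sumS phil) tLB_sumS.
Qed.
End K'.

Hypothesis HIt : sItA_eq_A mB sL tL.
Hypothesis HIs : tIsA_eq_A mB sL tL.

Lemma eps_ex y : exists b, forall x, sL b x = El2 x y.
Proof.
pose P y := exists b, forall x, sL b x = El2 x y.
have P0 : P 0 by exists 0 => x; rewrite (lin0 (sLB x)) (lin0 (El2l2 x)).
have PD a b : P a -> P b -> P (a + b).
  by move=> [ba Ha] [bb Hb]; exists (ba + bb) => x; rewrite (linD (sLB x)) Ha Hb (linD (El2l2 x)).
have [n [ys [bs [Hy ->]]]] := HIt y.
apply: (@sumP P) => // i.
have [m [psis [as_ [psil [psit ->]]]]] := Hy i.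
rewrite /P sLB_sumI; apply: (@sumP P) => // j.
exists (psis j (E2 (bs i) (as_ j))) => x.
by rewrite (K2 (psil j) (psit j)) Els.
Qed.

Definition eps y := proj1_sig (constructive_indefinite_description _ (eps_ex y)).
Lemma epsP y x : sL (eps y) x = El2 x y.
Proof. by rewrite /eps; case: constructive_indefinite_description => b /= ->. Qed.
Lemma eps_uniq b y : (forall x, sL b x = El2 x y) -> eps y = b.
Proof. by move=> Hb; apply: (lmb_s_inj H) => x; rewrite epsP Hb. Qed.
Lemma eps_lin : is_linear_map eps.
Proof. by move=> k y y'; apply: eps_uniq => x; rewrite (sLB x) !epsP (El2l2 x). Qed.
Lemma eps_s x a : eps (sL x a) = mB x (eps a).
Proof. by apply: eps_uniq => x0; rewrite s_mul epsP Els. Qed.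
Lemma eps_t y a : eps (tL y a) = mB (eps a) y.
Proof. by apply: eps_uniq => x0; rewrite s_mul epsP El2bal. Qed.

Definition Z y q := E2 y q - tL (eps y) q.

Lemma Z_phi (phi : A -> B) : is_linear_map phi -> (forall x a, phi (sL x a) = mB x (phi a)) ->
  forall x y q, tL (phi x) (Z y q) = 0.
Proof.
move=> phil phis x y q; rewrite /Z (linB (tLl _)) (K1 phil phis) -epsP phis t_mul.
by rewrite subrr.
Qed.

Lemma Z_t b y q : Z (tL b y) q = tL b (Z y q).
Proof. by rewrite /Z E3 eps_t t_mul (linB (tLl _)). Qed.

Lemma Z0 y q : Z y q = 0.
Proof.
move: y; pose P y := Z y q = 0.
have P0 : P 0 by rewrite /P /Z (lin0 (E2l1 q)) (lin0 eps_lin) (lin0 (tLB q)) subr0.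
have PD a b : P a -> P b -> P (a + b).
  rewrite /P /Z (linD (E2l1 q)) (linD eps_lin) (linD (tLB q)) => Ha Hb.
  by rewrite opprD addrACA Ha Hb addr0.
move=> y; have [n [ys [bs [Hy ->]]]] := HIs y.
apply: (@sumP P) => // i.
rewrite /P Z_t.
have [m [phis [as_ [phil [phis_s ->]]]]] := Hy i.
rewrite tLB_sumI; apply: big1 => j _.
exact: (Z_phi (phil j) (phis_s j)).
Qed.

Lemma E2_eps y q : E2 y q = tL (eps y) q.
Proof. by apply/eqP; rewrite -subr_eq0; apply/eqP; apply: Z0. Qed.

Lemma counit_E (e0 : A -> B) : left_counit mA mB sL tL D1 D2 e0 ->
  forall c d, tL (e0 c) d = E2 c d.
Proof.
case=> e0l e0s e0t e0c1 _ c d.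
have [u Hu] := HRs [:: (c, d)].
have G'l : bilin (fun p q => tL (e0 p) q).
  by split=> k *; [rewrite e0l (tLB _)|rewrite (tLl _)].
have G'b x a b : tL (e0 (sL x a)) b = tL (e0 a) (tL x b) by rewrite e0s t_mul.
rewrite /E2 (E_spec Hu) -(sumG1 (fun p q => tL (e0 p) q)) -(Qresp G'l G'b Hu) sumG_T_rho.
apply: eq_bigr => p _; rewrite -(e0c1 p.1 p.2 (D2 p.1 p.2)) //.
by rewrite /T_rho /= cats0.
Qed.

Lemma main_thm : exists eps : A -> B,
    left_counit mA mB sL tL D1 D2 eps /\
    forall eps' : A -> B, left_counit mA mB sL tL D1 D2 eps' -> forall a, eps' a = eps a.
Proof.
have Hc : left_counit mA mB sL tL D1 D2 eps.
  split.
  - exact: eps_lin.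
  - exact: eps_s.
  - exact: eps_t.
  - move=> a b w Hw.
    transitivity (E w); first by rewrite E_sum; apply: eq_bigr => q _; rewrite E2_eps.
    by rewrite -(E_resp Hw) /T_rho /= cats0 E_D2.
  - move=> a b w Hw.
    transitivity (El w); first by rewrite El_sum; apply: eq_bigr => q _; rewrite -epsP.
    by rewrite -(El_resp Hw) /T_lambda /= cats0 El_D1.
exists eps; split => // e0 He0 a.
apply: (lmb_t_inj H) => d.
by rewrite (counit_E He0) (counit_E Hc).
Qed.

End BA.

Theorem proposition3p9 (A B : lmodType CC) (mA : A -> A -> A) (mB : B -> B -> B)
    (sL sR tL tR : B -> A -> A) (D1 D2 : A -> A -> ftensor A) :
  left_multiplier_bialgebroid mA mB sL sR tL tR D1 D2 ->
  qbijective (eq_lambda tL tR) (eqQ sL tL) (T_lambda D1) ->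
  qbijective (eq_rho sL sR) (eqQ sL tL) (T_rho D2) ->
  sItA_eq_A mB sL tL ->
  tIsA_eq_A mB sL tL ->
  exists eps : A -> B,
    left_counit mA mB sL tL D1 D2 eps /\
    forall eps' : A -> B, left_counit mA mB sL tL D1 D2 eps' -> forall a, eps' a = eps a.
Proof. by move=> H HL HR HIt HIs; apply: (main_thm H HL HR HIt HIs). Qed.
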